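(* Let $y\in\mathbb{R}^n$ and $X\in\mathbb{R}^{n\times p}$ with columns $x_1,\dots,x_p$ satisfying $\|x_j\|_2=1$ for all $j$, and let $\lambda>0$. Let $(\hat\beta_0,\hat\beta^+,\hat\beta^-,\hat\Theta)$ be a solution of the strong hierarchical lasso, respectively of the weak hierarchical lasso (both defined in the context, with the quadratic loss and no elastic net penalty). Let $\hat y=\hat\beta_0\mathbf{1}+X(\hat\beta^+-\hat\beta^-)+\frac12\sum_{j\neq k}\hat\Theta_{jk}(x_j*x_k)$ be the fitted values and define the partial residuals $$r^{(-j)}=y-\hat y+x_j(\hat\beta^+_j-\hat\beta^-_j),\qquad r^{(-jk)}=y-\hat y+(x_j*x_k)\,\frac{\hat\Theta_{jk}+\hat\Theta_{kj}}{2}.$$ Then: (Strong) for the strong hierarchical lasso there exist $\hat\alpha_1,\dots,\hat\alpha_p\ge 0$, with $\hat\alpha_j=0$ whenever $\|\hat\Theta_j\|_1<\hat\beta^+_j+\hat\beta^-_j$, such that for all $j$ and all $k\neq j$ $$\hat\beta^+_j-\hat\beta^-_j=\mathcal S\big(x_j^Tr^{(-j)},\lambda-\hat\alpha_j\big),\qquad \hat\Theta_{jk}=\frac{\mathcal S\big[(x_j*x_k)^Tr^{(-jk)},\ \lambda+\hat\alpha_j+\hat\alpha_k\big]}{\|x_j*x_k\|^2};$$ (Weak) for the weak hierarchical lasso there exist $\tilde\alpha_1,\dots,\tilde\alpha_p\ge 0$, with $\tilde\alpha_j=0$ whenever $\|\hat\Theta_j\|_1<\hat\beta^+_j+\hat\beta^-_j$,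 such that for all $j$ and all $k\ne j$ $$\hat\beta^+_j-\hat\beta^-_j=\mathcal S\big(x_j^Tr^{(-j)},\lambda-\tilde\alpha_j\big),\qquad \frac{\hat\Theta_{jk}+\hat\Theta_{kj}}{2}=\frac{\mathcal S\big[(x_j*x_k)^Tr^{(-jk)},\ \lambda+2\min\{\tilde\alpha_j,\tilde\alpha_k\}\big]}{\|x_j*x_k\|^2}.$$
   Context: $*$ denotes the elementwise product of vectors, $\mathbf 1\in\mathbb{R}^n$ the all-ones vector, and $\mathcal S(c,\lambda)=\mathrm{sign}(c)(|c|-\lambda)_+$ the soft-thresholding operator. For a matrix $\Theta\in\mathbb{R}^{p\times p}$, $\Theta_j$ denotes its $j$th row and $\|\Theta\|_1=\sum_{j\neq k}|\Theta_{jk}|$. Write $X_{i\cdot}$ for the $i$th row of $X$. The quadratic loss is $q(\beta_0,\beta,\Theta)=\frac12\sum_{i=1}^n\big(y_i-\beta_0-X_{i\cdot}\beta-\frac12X_{i\cdot}\Theta X_{i\cdot}^T\big)^2$. The strong hierarchical lasso is the problem: minimize over $\beta_0\in\mathbb{R}$, $\beta^+,\beta^-\in\mathbb{R}^p$, $\Theta\in\mathbb{R}^{p\times p}$ with $\Theta_{jj}=0$ for all $j$, the objective $q(\beta_0,\beta^+-\beta^-,\Theta)+\lambda\mathbf 1^T(\beta^++\beta^-)+\frac{\lambda}{2}\|\Theta\|_1$ subject to $\Theta=\Theta^T$ and, for each $j=1,\dots,p$, $\|\Theta_j\|_1\le\beta^+_j+\beta^-_j$, $\beta^+_j\ge0$,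 $\beta^-_j\ge0$. The weak hierarchical lasso is the same problem without the symmetry constraint $\Theta=\Theta^T$. *)

(* Defs.v *)
From HB Require Import structures.
From mathcomp Require Import all_boot all_order all_algebra.
From mathcomp Require Import reals.
Set Implicit Arguments. Unset Strict Implicit. Unset Printing Implicit Defensive.
Import Order.TTheory GRing.Theory Num.Theory.
Local Open Scope ring_scope.

Section HierLasso.
Variables (R : realType) (n p : nat).

Definition soft (c l : R) : R := Num.sg c * Num.max (`|c| - l) 0.

Definition colprod (X : 'M[R]_(n, p)) (j k : 'I_p) : 'I_n -> R :=
  fun i => X i j * X i k.

Definition dotv (a b : 'I_n -> R) : R := \sum_i a i * b i.

Definition qloss (X : 'M[R]_(n, p)) (y : 'I_n -> R) (b0 : R) (b : 'I_p -> R)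
    (Th : 'M[R]_p) : R :=
  (1/2) * \sum_i (y i - b0 - \sum_j X i j * b j
                  - (1/2) * \sum_j \sum_k X i j * Th j k * X i k) ^+ 2.

Definition l1off (Th : 'M[R]_p) : R := \sum_j \sum_(k | k != j) `|Th j k|.

Definition rowl1 (Th : 'M[R]_p) (j : 'I_p) : R := \sum_k `|Th j k|.

Definition hl_obj (X : 'M[R]_(n, p)) (y : 'I_n -> R) (lam : R) (b0 : R)
    (bp bm : 'I_p -> R) (Th : 'M[R]_p) : R :=
  qloss X y b0 (fun j => bp j - bm j) Th + lam * \sum_j (bp j + bm j)
  + (lam / 2) * l1off Th.

Definition weak_feasible (bp bm : 'I_p -> R) (Th : 'M[R]_p) : Prop :=
  (forall j, Th j j = 0) /\
  (forall j, rowl1 Th j <= bp j + bm j /\ 0 <= bp j /\ 0 <= bm j).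

Definition strong_feasible (bp bm : 'I_p -> R) (Th : 'M[R]_p) : Prop :=
  Th = Th^T /\ weak_feasible bp bm Th.

Definition is_solution (feas : ('I_p -> R) -> ('I_p -> R) -> 'M[R]_p -> Prop)
    (X : 'M[R]_(n, p)) (y : 'I_n -> R) (lam : R) (b0 : R)
    (bp bm : 'I_p -> R) (Th : 'M[R]_p) : Prop :=
  feas bp bm Th /\
  forall b0' bp' bm' Th', feas bp' bm' Th' ->
    hl_obj X y lam b0 bp bm Th <= hl_obj X y lam b0' bp' bm' Th'.

Definition strong_hl_solution := is_solution strong_feasible.
Definition weak_hl_solution := is_solution weak_feasible.

Definition fitted (X : 'M[R]_(n, p)) (b0 : R) (bp bm : 'I_p -> R)
    (Th : 'M[R]_p) : 'I_n -> R :=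
  fun i => b0 + \sum_j X i j * (bp j - bm j)
           + (1/2) * \sum_j \sum_(k | k != j) Th j k * colprod X j k i.

Definition resid_j (X : 'M[R]_(n, p)) (y : 'I_n -> R) (b0 : R)
    (bp bm : 'I_p -> R) (Th : 'M[R]_p) (j : 'I_p) : 'I_n -> R :=
  fun i => y i - fitted X b0 bp bm Th i + X i j * (bp j - bm j).

Definition resid_jk (X : 'M[R]_(n, p)) (y : 'I_n -> R) (b0 : R)
    (bp bm : 'I_p -> R) (Th : 'M[R]_p) (j k : 'I_p) : 'I_n -> R :=
  fun i => y i - fitted X b0 bp bm Th i
           + colprod X j k i * ((Th j k + Th k j) / 2).

End HierLasso.

(* Main.v *)
Require Import Defs.
From HB Require Import structures.
From mathcomp Require Import all_boot all_order all_algebra.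
From mathcomp Require Import reals ring lra.
Import Order.TTheory GRing.Theory Num.Theory.
Local Open Scope ring_scope.


Section Gen.
Variables (R : realType) (n p : nat) (X : 'M[R]_(n, p)) (y : 'I_n -> R) (lam : R)
  (b0 : R) (bp bm : 'I_p -> R) (Th : 'M[R]_p).

Definition resid (i : 'I_n) : R := y i - b0 - \sum_j X i j * (bp j - bm j)
                  - (1/2) * \sum_j \sum_k X i j * Th j k * X i k.
Definition gj (j : 'I_p) : R := \sum_i X i j * resid i.
Definition Gjk (j k : 'I_p) : R := \sum_i X i j * X i k * resid i.

Section Dir.
Variables (Dbp Dbm : 'I_p -> R) (DTh : 'M[R]_p).
Definition ee (i : 'I_n) : R := \sum_j X i j * (Dbp j - Dbm j)
                  + (1/2) * \sum_j \sum_k X i j * DTh j k * X i k.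

Lemma inner_new t i :
  y i - b0 - \sum_j X i j * ((bp j + t * Dbp j) - (bm j + t * Dbm j))
   - (1/2) * \sum_j \sum_k X i j * (Th + t *: DTh) j k * X i k
  = resid i - t * ee i.
Proof.
rewrite /resid /ee.
have -> : \sum_j X i j * ((bp j + t * Dbp j) - (bm j + t * Dbm j))
   = \sum_j X i j * (bp j - bm j) + t * \sum_j X i j * (Dbp j - Dbm j).
  rewrite mulr_sumr -big_split /=; apply: eq_bigr => j _; ring.
have -> : \sum_j \sum_k X i j * (Th + t *: DTh) j k * X i k
   = \sum_j \sum_k X i j * Th j k * X i k + t * \sum_j \sum_k X i j * DTh j k * X i k.
  rewrite mulr_sumr -big_split /=; apply: eq_bigr => j _.
  rewrite mulr_sumr -big_split /=; apply: eq_bigr => k _.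
  rewrite !mxE; ring.
ring.
Qed.

Lemma rese : \sum_i resid i * ee i =
  \sum_j (Dbp j - Dbm j) * gj j + (1/2) * \sum_j \sum_k DTh j k * Gjk j k.
Proof.
rewrite /ee /gj /Gjk.
have -> : \sum_i resid i * (\sum_j X i j * (Dbp j - Dbm j)
                  + (1/2) * \sum_j \sum_k X i j * DTh j k * X i k)
  = \sum_i \sum_j resid i * X i j * (Dbp j - Dbm j) +
    (1/2) * \sum_i \sum_j \sum_k resid i * X i j * DTh j k * X i k.
  rewrite mulr_sumr -big_split /=; apply: eq_bigr => i _.
  rewrite mulrDr; congr (_ + _).
    by rewrite mulr_sumr; apply: eq_bigr => j _; ring.
  rewrite mulrCA; congr (_ * _); rewrite mulr_sumr; apply: eq_bigr => j _.
  rewrite mulr_sumr; apply: eq_bigr => k _; ring.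
rewrite exchange_big /=; congr (_ + _).
  apply: eq_bigr => j _; rewrite mulr_sumr; apply: eq_bigr => i _; ring.
congr (_ * _); rewrite exchange_big /=; apply: eq_bigr => j _.
rewrite exchange_big /=; apply: eq_bigr => k _.
rewrite mulr_sumr; apply: eq_bigr => i _; ring.
Qed.

Lemma obj_expand t a :
  l1off (Th + t *: DTh) = l1off Th + t * a ->
  hl_obj X y lam b0 (fun m => bp m + t * Dbp m) (fun m => bm m + t * Dbm m) (Th + t *: DTh)
  = hl_obj X y lam b0 bp bm Th
    + t * (- \sum_i resid i * ee i + lam * \sum_j (Dbp j + Dbm j) + lam / 2 * a)
    + t ^+ 2 * ((1/2) * \sum_i ee i ^+ 2).
Proof.
move=> hl; rewrite /hl_obj hl /qloss.
under eq_bigr do rewrite inner_new.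
have -> : \sum_j (bp j + t * Dbp j + (bm j + t * Dbm j))
   = \sum_j (bp j + bm j) + t * \sum_j (Dbp j + Dbm j).
  rewrite mulr_sumr -big_split /=; apply: eq_bigr => j _; ring.
have -> : \sum_i (resid i - t * ee i) ^+ 2 = \sum_i (resid i) ^+ 2
    - 2 * t * \sum_i resid i * ee i + t ^+ 2 * \sum_i ee i ^+ 2.
  rewrite !mulr_sumr -sumrB -big_split /=; apply: eq_bigr => i _; ring.
set S1 := \sum_i _ ^+ 2; set S2 := \sum_i _ * ee i; set S3 := \sum_i ee i ^+ 2. set S4 := \sum_j (bp j + bm j). set S5 := \sum_j (Dbp j + Dbm j). set L := l1off _. by field.
Qed.

End Dir.

Lemma first_order (A B t0 : R) : 0 < t0 -> 0 <= B ->
  (forall t, 0 < t -> t <= t0 -> 0 <= t * A + t ^+ 2 * B) -> 0 <= A.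
Proof.
move=> t0p B0 H; rewrite leNgt; apply/negP => A0.
pose t := Num.min t0 (- A / (2 * B + 1)).
have B1 : 0 < 2 * B + 1 by lra.
have tp : 0 < t by rewrite lt_min t0p /= divr_gt0 // oppr_gt0.
have tle : t <= - A / (2 * B + 1) by rewrite ge_min lexx orbT.
have tt0 : t <= t0 by rewrite ge_min lexx.
have H' := H t tp tt0.
have : t * (2 * B + 1) <= - A by rewrite -ler_pdivlMr.
move=> h2.
have : 0 <= t * (A + t * B) by rewrite mulrDr mulrA -expr2.
rewrite pmulr_rge0 // => h3.
nra.
Qed.

Lemma gen (feas : ('I_p -> R) -> ('I_p -> R) -> 'M[R]_p -> Prop) :
  is_solution feas X y lam b0 bp bm Th ->
  forall Dbp Dbm DTh t0 a, 0 < t0 ->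
  (forall t, 0 < t -> t <= t0 ->
     feas (fun m => bp m + t * Dbp m) (fun m => bm m + t * Dbm m) (Th + t *: DTh)) ->
  (forall t, 0 < t -> t <= t0 -> l1off (Th + t *: DTh) = l1off Th + t * a) ->
  0 <= - (\sum_j (Dbp j - Dbm j) * gj j + (1/2) * \sum_j \sum_k DTh j k * Gjk j k)
       + lam * \sum_j (Dbp j + Dbm j) + lam / 2 * a.
Proof.
move=> [_ opt] Dbp Dbm DTh t0 a t0p Hf Hl.
rewrite -rese.
apply: (first_order _ ((1/2) * \sum_i ee Dbp Dbm DTh i ^+ 2) _ t0p).
  apply: mulr_ge0; [lra | apply: sumr_ge0 => i _; exact: sqr_ge0].
move=> t tp tt0.
have := opt b0 _ _ _ (Hf t tp tt0); rewrite (obj_expand Dbp Dbm DTh t a (Hl t tp tt0)).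
set A := (- _ + _ + _); set B := (_ * \sum_i _); set O := hl_obj _ _ _ _ _ _ _.
move=> h; lra.
Qed.

End Gen.
Section Help.
Variables (R : realType) (p : nat).

Definition dl (j : 'I_p) (c : R) : 'I_p -> R := fun m => if m == j then c else 0.

Lemma sum_dl j c (h : 'I_p -> R) : \sum_m dl j c m * h m = c * h j.
Proof.
rewrite (bigD1 j) //= /dl eqxx big1 ?addr0 // => m /negbTE ->; exact: mul0r.
Qed.

Lemma sum_dl1 j c : \sum_m dl j c m = c.
Proof. by rewrite (bigD1 j) //= /dl eqxx big1 ?addr0 // => m /negbTE ->. Qed.

Lemma dd (j k : 'I_p) (s : R) (G : 'I_p -> 'I_p -> R) :
  \sum_u \sum_v (if (u == j) && (v == k) then s else 0) * G u v = s * G j k.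
Proof.
rewrite (bigD1 j) //= [X in _ + X]big1 ?addr0; last first.
  by move=> u /negbTE ->; rewrite big1 // => v _; rewrite andFb mul0r.
rewrite (bigD1 k) //= !eqxx big1 ?addr0 // => v /negbTE ->.
by rewrite andbF mul0r.
Qed.

Lemma sum_cond (m j k : 'I_p) (c : R) :
  \sum_v (if (m == j) && (v == k) then c else 0) = if m == j then c else 0.
Proof.
case: (m == j); last by rewrite big1.
by rewrite (bigD1 k) //= eqxx big1 ?addr0 // => v /negbTE ->.
Qed.

Definition pm (j k : 'I_p) (s1 s2 : R) : 'M[R]_p :=
  \matrix_(u, v) ((if (u == j) && (v == k) then s1 else 0)
                 + (if (u == k) && (v == j) then s2 else 0)).

Lemma sum_pm j k s1 s2 (G : 'I_p -> 'I_p -> R) :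
  \sum_u \sum_v pm j k s1 s2 u v * G u v = s1 * G j k + s2 * G k j.
Proof.
rewrite -(dd j k s1 G) -(dd k j s2 G) -big_split /=; apply: eq_bigr => u _.
rewrite -big_split /=; apply: eq_bigr => v _; by rewrite mxE mulrDl.
Qed.

Lemma diff_pm (Th : 'M[R]_p) j k s1 s2 t u v : j != k ->
  `|(Th + t *: pm j k s1 s2) u v| - `|Th u v| =
  (if (u == j) && (v == k) then `|Th j k + t * s1| - `|Th j k| else 0) +
  (if (u == k) && (v == j) then `|Th k j + t * s2| - `|Th k j| else 0).
Proof.
move=> jk; have kj : (k == j) = false by rewrite eq_sym (negbTE jk).
rewrite !mxE.
have [->|uj] := eqVneq u j; have [->|vk] := eqVneq v k;
  rewrite ?eqxx ?kj ?(negbTE jk) /= ?addr0 ?mulr0 ?subrr ?add0r //.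
- by rewrite addr0 subrr.
- by rewrite andbF mulr0 addr0 subrr.
- have [->|uk] := eqVneq u k; have [->|vj] := eqVneq v j;
  by rewrite ?eqxx ?(negbTE uk) ?(negbTE vj) /= ?andbF ?mulr0 ?addr0 ?subrr.
Qed.

Lemma rowl1_pm (Th : 'M[R]_p) j k s1 s2 t m : j != k ->
  rowl1 (Th + t *: pm j k s1 s2) m = rowl1 Th m
   + (if m == j then `|Th j k + t * s1| - `|Th j k| else 0)
   + (if m == k then `|Th k j + t * s2| - `|Th k j| else 0).
Proof.
move=> jk; rewrite /rowl1 -(sum_cond m j k (`|Th j k + t * s1| - `|Th j k|)) -(sum_cond m k j (`|Th k j + t * s2| - `|Th k j|)) -addrA -big_split /= -big_split /=.
apply: eq_bigr => v _; rewrite -(@diff_pm Th j k s1 s2 t m v jk); ring.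
Qed.

Lemma sum_cond_off (m j k : 'I_p) (c : R) : j != k ->
  \sum_(v | v != m) (if (m == j) && (v == k) then c else 0) = if m == j then c else 0.
Proof.
move=> jk; have [->|mj] := eqVneq m j; last by rewrite big1.
rewrite (bigD1 k) /=; last by rewrite eq_sym.
by rewrite eqxx big1 ?addr0 // => v /andP [_ /negbTE ->].
Qed.

Lemma l1off_pm (Th : 'M[R]_p) j k s1 s2 t : j != k ->
  l1off (Th + t *: pm j k s1 s2) = l1off Th
   + (`|Th j k + t * s1| - `|Th j k|) + (`|Th k j + t * s2| - `|Th k j|).
Proof.
move=> jk; have kj : k != j by rewrite eq_sym.
rewrite /l1off.
set c1 := `|Th j k + t * s1| - `|Th j k|.
set c2 := `|Th k j + t * s2| - `|Th k j|.
transitivity (\sum_u (\sum_(v | v != u) `|Th u v| + ((if u == j then c1 else 0) + (if u == k then c2 else 0)))).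
  apply: eq_bigr => u _.
  rewrite -(sum_cond_off u j k c1 jk) -(sum_cond_off u k j c2 kj) -!big_split /=.
  apply: eq_bigr => v _; rewrite -(@diff_pm Th j k s1 s2 t u v jk); ring.
rewrite !big_split /=.
have E1 := sum_dl1 j c1; have E2 := sum_dl1 k c2; rewrite /dl in E1 E2.
rewrite E1 E2; ring.
Qed.

Lemma l1off_0 (Th : 'M[R]_p) t : l1off (Th + t *: (0 : 'M[R]_p)) = l1off Th + t * 0.
Proof. by rewrite scaler0 addr0 mulr0 addr0. Qed.


End Help.

Section Alg.
Variable R : realType.

Lemma normE (x : R) : (0 <= x /\ `|x| = x) \/ (x < 0 /\ `|x| = - x).
Proof.
have [h|h] := leP 0 x; first by left; rewrite ger0_norm.
by right; rewrite ler0_norm // ltW.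
Qed.

Lemma absinc (s a t : R) : (s = 1 \/ s = -1) -> 0 <= s * a -> 0 <= t ->
  `|a + t * s| = `|a| + t.
Proof.
move=> [->|->] ha ht.
  rewrite mul1r in ha; rewrite mulr1 !ger0_norm //; lra.
rewrite mulN1r in ha; rewrite mulrN1 !ler0_norm //; lra.
Qed.

Lemma absdec (s a t : R) : (s = 1 \/ s = -1) -> 0 < s * a -> 0 <= t -> t <= `|a| ->
  `|a + t * (- s)| = `|a| - t.
Proof.
move=> [->|->] ha ht.
  rewrite mul1r in ha; rewrite (ger0_norm (ltW ha)) => hta.
  rewrite mulrN1 ger0_norm //; lra.
rewrite mulN1r in ha; rewrite (ler0_norm (_ : a <= 0)); last lra.
move=> hta; rewrite opprK mulr1 ler0_norm //; lra.
Qed.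

Lemma soft_beta (be g : R) :
  (0 < be /\ 0 <= g) \/ (be < 0 /\ g <= 0) \/ be = 0 \/ g = 0 ->
  be = soft (g + be) `|g|.
Proof.
rewrite /soft => -[[hb hg]|[[hb hg]|[->|->]]].
- rewrite gtr0_sg; last lra.
  rewrite !ger0_norm; try lra.
  by rewrite max_l; [ring | lra].
- rewrite ltr0_sg; last lra.
  rewrite ler0_norm; last lra. rewrite (ler0_norm hg).
  by rewrite max_l; [ring | lra].
- by rewrite addr0 subrr max_r // mulr0.
- rewrite add0r normr0 subr0 max_l ?normr_ge0 //; exact: numEsg.
Qed.

Lemma soft_pair (th G d L : R) : 0 < L -> 0 <= d -> (d = 0 -> G = 0) ->
  (th = 0 /\ `|G| <= L) \/ (0 < th /\ G = L) \/ (th < 0 /\ G = - L) ->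
  th = soft (G + d * th) L / d.
Proof.
move=> hL hd hdG; rewrite /soft => -[[-> hG]|[[ht hG]|[ht hG]]].
- by rewrite mulr0 addr0 max_r ?mulr0 ?mul0r //; lra.
- have dp : 0 < d.
    rewrite lt_def hd andbT; apply/negP => /eqP d0; move: (hdG d0) => ?; lra.
  rewrite hG.
  have c0 : 0 < L + d * th by have := mulr_gt0 dp ht; lra.
  rewrite gtr0_sg // ger0_norm ?ltW // max_l; last by have := mulr_gt0 dp ht; lra.
  rewrite mul1r addrC addKr [d * th]mulrC mulfK //; exact: lt0r_neq0.
- have dp : 0 < d.
    rewrite lt_def hd andbT; apply/negP => /eqP d0; move: (hdG d0) => ?; lra.
  rewrite hG.
  have c0 : - L + d * th < 0 by have := mulr_gt0 dp (_ : 0 < - th); lra.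
  rewrite ltr0_sg // ler0_norm ?ltW // max_l; last first.
    by have := mulr_gt0 dp (_ : 0 < - th); lra.
  have -> : - (- L + d * th) - L = - (d * th) by ring.
  rewrite mulN1r opprK [d * th]mulrC mulfK //; exact: lt0r_neq0.
Qed.

End Alg.

Lemma weak_comb (R : realType) (a c G A B : R) : 0 < A -> 0 < B ->
  (0 < a -> G = A) -> (a < 0 -> G = - A) -> (a = 0 -> - A <= G /\ G <= A) ->
  (0 < c -> G = B) -> (c < 0 -> G = - B) -> (c = 0 -> - B <= G /\ G <= B) ->
  ((a + c) / 2 = 0 /\ `|G| <= Num.min A B) \/ (0 < (a + c) / 2 /\ G = Num.min A B)
  \/ ((a + c) / 2 < 0 /\ G = - Num.min A B).
Proof.
move=> hA hB e1 e2 e3 f1 f2 f3.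
have [m|m] := leP A B.
- have [h|h|h] := ltgtP a 0; have [h'|h'|h'] := ltgtP c 0.
  + by right; right; have := e2 h; split; lra.
  + by have := e2 h; have := f1 h'; lra.
  + by right; right; have := e2 h; split; lra.
  + by have := e1 h; have := f2 h'; lra.
  + by right; left; have := e1 h; split; lra.
  + by right; left; have := e1 h; split; lra.
  + by have := e3 h; have := f2 h'; lra.
  + by have := e3 h; have := f1 h'; lra.
  + left; have := e3 h; have := f3 h'; rewrite ler_norml => -[? ?] [? ?].
    by split; [lra | apply/andP; split; lra].
- have [h|h|h] := ltgtP a 0; have [h'|h'|h'] := ltgtP c 0.
  + by right; right; have := f2 h'; split; lra.
  + by have := e2 h; have := f1 h'; lra.
  + by have := e2 h; have := f3 h'; lra.
  + by have := e1 h; have := f2 h'; lra.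
  + by right; left; have := f1 h'; split; lra.
  + by have := e1 h; have := f3 h'; lra.
  + by right; right; have := f2 h'; split; lra.
  + by right; left; have := f1 h'; split; lra.
  + left; have := e3 h; have := f3 h'; rewrite ler_norml => -[? ?] [? ?].
    by split; [lra | apply/andP; split; lra].
Qed.

Arguments resid {R n p}. Arguments gj {R n p}. Arguments Gjk {R n p}.
Arguments gen {R n p X y lam b0 bp bm Th feas}.
Arguments dl {R p}. Arguments pm {R p}.
Arguments sum_dl {R p}. Arguments sum_dl1 {R p}. Arguments dd {R p}. Arguments sum_cond {R p}.
Arguments sum_pm {R p}. Arguments diff_pm {R p}. Arguments rowl1_pm {R p}. Arguments sum_cond_off {R p}.
Arguments l1off_pm {R p}. Arguments l1off_0 {R p}.

Section Main.
Variables (R : realType) (n p : nat) (X : 'M[R]_(n, p)) (y : 'I_n -> R) (lam : R)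
  (b0 : R) (bp bm : 'I_p -> R) (Th : 'M[R]_p) (b : bool).

Definition feasb : ('I_p -> R) -> ('I_p -> R) -> 'M[R]_p -> Prop :=
  if b then @strong_feasible R p else @weak_feasible R p.

Hypotheses (Hlam : 0 < lam) (sol : is_solution feasb X y lam b0 bp bm Th).

Local Notation g := (gj X y b0 bp bm Th).
Local Notation G := (Gjk X y b0 bp bm Th).

Lemma wf : weak_feasible bp bm Th.
Proof. by move: (proj1 sol); rewrite /feasb; case: b => [[]|]. Qed.

Lemma symTh : b -> Th = Th^T.
Proof. by move: (proj1 sol); rewrite /feasb; case: b => [[]|]. Qed.

Lemma diag0 u : Th u u = 0. Proof. by case: wf. Qed.
Lemma rowok m : rowl1 Th m <= bp m + bm m. Proof. by case: wf => _ /(_ m) []. Qed.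
Lemma bp0 m : 0 <= bp m. Proof. by case: wf => _ /(_ m) [_ []]. Qed.
Lemma bm0 m : 0 <= bm m. Proof. by case: wf => _ /(_ m) [_ []]. Qed.

Lemma feas_intro (bp' bm' : 'I_p -> R) (Th' : 'M[R]_p) : (forall u, Th' u u = 0) ->
  (forall m, rowl1 Th' m <= bp' m + bm' m) -> (forall m, 0 <= bp' m) ->
  (forall m, 0 <= bm' m) -> (b -> Th' = Th'^T) -> feasb bp' bm' Th'.
Proof.
move=> h1 h2 h3 h4 h5; have w : weak_feasible bp' bm' Th' by split=> // m; split.
by rewrite /feasb; move: h5; case: b => // /(_ isT).
Qed.

Lemma dlB (j : 'I_p) (a c : R) m : dl j a m - dl j c m = dl j (a - c) m.
Proof. by rewrite /dl; case: ifP => _; rewrite ?subr0. Qed.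
Lemma dlD (j : 'I_p) (a c : R) m : dl j a m + dl j c m = dl j (a + c) m.
Proof. by rewrite /dl; case: ifP => _; rewrite ?addr0. Qed.

Lemma beta1 (j : 'I_p) (a c t0 : R) : 0 < t0 ->
  (forall t, 0 < t -> t <= t0 ->
    [/\ 0 <= bp j + t * a, 0 <= bm j + t * c & rowl1 Th j <= bp j + bm j + t * (a + c)]) ->
  0 <= - ((a - c) * g j) + lam * (a + c).
Proof.
move=> t0p H.
have := gen sol (dl j a) (dl j c) 0 t0 0 t0p _ (fun t _ _ => l1off_0 Th t).
have -> : \sum_j0 (dl j a j0 - dl j c j0) * g j0 = (a - c) * g j.
  by under eq_bigr do rewrite dlB; rewrite sum_dl.
have -> : \sum_j0 (dl j a j0 + dl j c j0) = a + c.
  by under eq_bigr do rewrite dlD; rewrite sum_dl1.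
have -> : \sum_j0 \sum_k (0 : 'M[R]_p) j0 k * G j0 k = 0.
  by rewrite big1 // => u _; rewrite big1 // => v _; rewrite mxE mul0r.
rewrite mulr0 addr0 mulr0 addr0; apply.
move=> t tp tt0; have [h1 h2 h3] := H t tp tt0.
rewrite scaler0 addr0; apply: feas_intro => //.
- exact: diag0.
- move=> m; rewrite /dl; case: ifP => [/eqP ->|_]; first by rewrite mulrDr addrA in h3 *; lra.
  by rewrite !mulr0 !addr0 rowok.
- by move=> m; rewrite /dl; case: ifP => [/eqP ->|_] //; rewrite mulr0 addr0 bp0.
- by move=> m; rewrite /dl; case: ifP => [/eqP ->|_] //; rewrite mulr0 addr0 bm0.
- exact: symTh.
Qed.

Lemma pm_diag (j k : 'I_p) (s1 s2 : R) u : j != k -> pm j k s1 s2 u u = 0.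
Proof.
move=> jk; rewrite mxE.
have [->|uj] := eqVneq u j; first by rewrite (negbTE jk) andbF andFb addr0.
by rewrite andFb add0r; case: (u == k) => //=.
Qed.

Lemma pm_symE (j k : 'I_p) (s : R) u v : pm j k s s u v = pm j k s s v u.
Proof. by rewrite !mxE addrC (andbC (v == j)) (andbC (v == k)). Qed.

Lemma Th_sym u v : b -> Th u v = Th v u.
Proof. by move=> /symTh Ht; rewrite [in LHS]Ht mxE. Qed.

Lemma Gsym j k : G k j = G j k.
Proof. by rewrite /Gjk; apply: eq_bigr => i _; rewrite (mulrC (X i k)). Qed.

Lemma pair_gen (j k : 'I_p) (jk : j != k) (s1 s2 pj mj pk mk c1 c2 t0 : R) :
  0 < t0 -> (b -> s1 = s2) ->
  (forall t, 0 < t -> t <= t0 -> `|Th j k + t * s1| = `|Th j k| + t * c1) ->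
  (forall t, 0 < t -> t <= t0 -> `|Th k j + t * s2| = `|Th k j| + t * c2) ->
  (forall t, 0 < t -> t <= t0 -> [/\ 0 <= bp j + t * pj, 0 <= bm j + t * mj,
        0 <= bp k + t * pk & 0 <= bm k + t * mk]) ->
  (forall t, 0 < t -> t <= t0 -> rowl1 Th j + t * c1 <= bp j + bm j + t * (pj + mj)) ->
  (forall t, 0 < t -> t <= t0 -> rowl1 Th k + t * c2 <= bp k + bm k + t * (pk + mk)) ->
  0 <= - ((pj - mj) * g j + (pk - mk) * g k + (s1 + s2) / 2 * G j k)
       + lam * (pj + mj + pk + mk) + lam / 2 * (c1 + c2).
Proof.
move=> t0p hs ha1 ha2 hnn hr1 hr2.
have kj : (k == j) = false by rewrite eq_sym (negbTE jk).
have jk' : (j == k) = false by rewrite (negbTE jk).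
have := gen sol (fun m => dl j pj m + dl k pk m) (fun m => dl j mj m + dl k mk m)
   (pm j k s1 s2) t0 (c1 + c2) t0p.
have -> : \sum_m ((dl j pj m + dl k pk m) - (dl j mj m + dl k mk m)) * g m
     = (pj - mj) * g j + (pk - mk) * g k.
  transitivity (\sum_m (dl j (pj - mj) m * g m + dl k (pk - mk) m * g m)).
    by apply: eq_bigr => m _; rewrite -!dlB; ring.
  by rewrite big_split /= !sum_dl.
have -> : \sum_m ((dl j pj m + dl k pk m) + (dl j mj m + dl k mk m))
     = pj + mj + pk + mk.
  transitivity (\sum_m (dl j (pj + mj) m + dl k (pk + mk) m)).
    by apply: eq_bigr => m _; rewrite -!dlD; ring.
  by rewrite big_split /= !sum_dl1 addrA.
rewrite sum_pm Gsym.
have E : - ((pj - mj) * g j + (pk - mk) * g k + 1 / 2 * (s1 * G k j + s2 * G k j)) =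
    - ((pj - mj) * g j + (pk - mk) * g k + (s1 + s2) / 2 * G k j) by field.
rewrite E; apply.
- move=> t tp tt0; have [h1 h2 h3 h4] := hnn t tp tt0.
  apply: feas_intro.
  + by move=> u; have := pm_diag j k s1 s2 u jk; rewrite !mxE diag0 => ->; rewrite mulr0 addr0.
  + move=> m; rewrite rowl1_pm //.
    have [->|mj'] := eqVneq m j.
      rewrite ?eqxx ?jk' ?kj /dl ?eqxx ?jk' ?kj ha1 // !addr0.
      by have := hr1 t tp tt0; rewrite !mulrDr; lra.
    have [->|mk'] := eqVneq m k.
      rewrite ?eqxx ?jk' ?kj /dl ?eqxx ?jk' ?kj ha2 // !add0r !addr0.
      by have := hr2 t tp tt0; rewrite !mulrDr; lra.
    by rewrite /dl (negbTE mj') (negbTE mk') /= !(addr0, mulr0) rowok.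
  + move=> m; rewrite /dl; have [->|mj'] := eqVneq m j; first by rewrite ?eqxx ?jk' ?addr0.
    have [->|mk'] := eqVneq m k; first by rewrite ?eqxx ?kj ?add0r.
    by rewrite /= !(addr0, mulr0) bp0.
  + move=> m; rewrite /dl; have [->|mj'] := eqVneq m j; first by rewrite ?eqxx ?jk' ?addr0.
    have [->|mk'] := eqVneq m k; first by rewrite ?eqxx ?kj ?add0r.
    by rewrite /= !(addr0, mulr0) bm0.
  + move=> hb; apply/matrixP => u v; rewrite [RHS]mxE !mxE (Th_sym u v hb) (hs hb).
    by congr (_ + t * _); rewrite (andbC (v == j)) (andbC (v == k)) addrC.
- move=> t tp tt0; rewrite l1off_pm // ha1 // ha2 //; ring.
Qed.

Lemma K1 j : `|g j| <= lam.
Proof.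
have h1 : 0 <= - ((1 - 0) * g j) + lam * (1 + 0).
  apply: (beta1 j 1 0 1 ltr01) => t tp _.
  have := bp0 j; have := bm0 j; have := rowok j; move=> *; split; lra.
have h2 : 0 <= - ((0 - 1) * g j) + lam * (0 + 1).
  apply: (beta1 j 0 1 1 ltr01) => t tp _.
  have := bp0 j; have := bm0 j; have := rowok j; move=> *; split; lra.
rewrite ler_norml; apply/andP; split; lra.
Qed.

Lemma K2 j : rowl1 Th j < bp j + bm j -> 0 < bp j -> g j = lam.
Proof.
move=> hs hp.
have t0p : 0 < Num.min (bp j) (bp j + bm j - rowl1 Th j) by rewrite lt_min hp /=; lra.
have h : 0 <= - ((-1 - 0) * g j) + lam * (-1 + 0).
  apply: (beta1 j (-1) 0 _ t0p) => t tp; rewrite le_min => /andP [a1 a2].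
  have := bm0 j; move=> *; split; lra.
have := K1 j; have := ler_norm (g j); lra.
Qed.

Lemma K2' j : rowl1 Th j < bp j + bm j -> 0 < bm j -> g j = - lam.
Proof.
move=> hs hp.
have t0p : 0 < Num.min (bm j) (bp j + bm j - rowl1 Th j) by rewrite lt_min hp /=; lra.
have h : 0 <= - ((0 - -1) * g j) + lam * (0 + -1).
  apply: (beta1 j 0 (-1) _ t0p) => t tp; rewrite le_min => /andP [a1 a2].
  have := bp0 j; move=> *; split; lra.
have := K1 j; have := ler_norm (- g j); rewrite normrN; lra.
Qed.

Lemma K3 j : 0 < bp j -> 0 < bm j -> g j = 0.
Proof.
move=> hp hm.
have h1 : 0 <= - ((1 - -1) * g j) + lam * (1 + -1).
  apply: (beta1 j 1 (-1) _ hm) => t tp tt0.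
  have := bp0 j; have := rowok j; move=> *; split; lra.
have h2 : 0 <= - ((-1 - 1) * g j) + lam * (-1 + 1).
  apply: (beta1 j (-1) 1 _ hp) => t tp tt0.
  have := bm0 j; have := rowok j; move=> *; split; lra.
lra.
Qed.

Definition sig j : R :=
  if 0 < bp j then 1 else if 0 < bm j then -1 else if 0 <= g j then 1 else -1.

Lemma sigE j : sig j = 1 \/ sig j = -1.
Proof. by rewrite /sig; case: ifP; [left | case: ifP; [right | case: ifP; [left|right]]]. Qed.

Definition pc j : R := if 0 < bp j then bp j else bm j.

Lemma active j : 0 < bp j + bm j ->
  0 < pc j /\ ((sig j = 1 /\ pc j = bp j) \/ (sig j = -1 /\ pc j = bm j)).
Proof.
move=> h; rewrite /sig /pc; have [hp|hp] := ltP 0 (bp j).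
  by split => //; left.
have [hm|hm] := ltP 0 (bm j); first by split => //; right.
have := bp0 j; have := bm0 j; lra.
Qed.

Lemma rowl1_ge j k : `|Th j k| <= rowl1 Th j.
Proof.
rewrite /rowl1 (bigD1 k) //= lerDl; apply: sumr_ge0 => i _; exact: normr_ge0.
Qed.

Definition wb : R := if b then 1 else 0.

Lemma inc (j k : 'I_p) (jk : j != k) (s tj tk : R) : (s = 1 \/ s = -1) ->
  0 <= s * Th j k -> -1 <= tj <= 1 -> -1 <= tk <= 1 ->
  0 <= - (tj * g j + wb * tk * g k + (1 + wb) * s / 2 * G j k)
       + (1 + wb) * lam + (1 + wb) * lam / 2.
Proof.
move=> hs hsT /andP [tj1 tj2] /andP [tk1 tk2].
have := @pair_gen j k jk s (wb * s) ((1 + tj) / 2) ((1 - tj) / 2)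
   (wb * (1 + tk) / 2) (wb * (1 - tk) / 2) 1 wb 1 ltr01.
rewrite /wb; have [hb|hb] := boolP b.
- move=> H.
  have : 0 <= - (((1 + tj) / 2 - (1 - tj) / 2) * g j + (1 * (1 + tk) / 2 - 1 * (1 - tk) / 2) * g k
     + (s + 1 * s) / 2 * G j k) + lam * ((1 + tj) / 2 + (1 - tj) / 2 + 1 * (1 + tk) / 2 + 1 * (1 - tk) / 2)
     + lam / 2 * (1 + 1).
    apply: H.
    + by move=> _; rewrite mul1r.
    + by move=> t tp _; rewrite mulr1 absinc // ltW.
    + by move=> t tp _; rewrite mul1r mulr1 (Th_sym k j hb) absinc // ltW.
    + move=> t tp _; have := bp0 j; have := bm0 j; have := bp0 k; have := bm0 k.
      have := mulr_ge0 (ltW tp) (_ : 0 <= 1 + tj); have := mulr_ge0 (ltW tp) (_ : 0 <= 1 - tj).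
      have := mulr_ge0 (ltW tp) (_ : 0 <= 1 + tk); have := mulr_ge0 (ltW tp) (_ : 0 <= 1 - tk).
      move=> *; split; lra.
    + move=> t tp _; have := rowok j; lra.
    + move=> t tp _; have := rowok k; lra.
  lra.
- move=> H.
  have : 0 <= - (((1 + tj) / 2 - (1 - tj) / 2) * g j + (0 * (1 + tk) / 2 - 0 * (1 - tk) / 2) * g k
     + (s + 0 * s) / 2 * G j k) + lam * ((1 + tj) / 2 + (1 - tj) / 2 + 0 * (1 + tk) / 2 + 0 * (1 - tk) / 2)
     + lam / 2 * (1 + 0).
    apply: H.
    + by move=> /negP.
    + by move=> t tp _; rewrite mulr1 absinc // ltW.
    + by move=> t tp _; rewrite !mul0r !mulr0 !addr0.
    + move=> t tp _; have := bp0 j; have := bm0 j; have := bp0 k; have := bm0 k.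
      have := mulr_ge0 (ltW tp) (_ : 0 <= 1 + tj); have := mulr_ge0 (ltW tp) (_ : 0 <= 1 - tj).
      move=> *; split; lra.
    + move=> t tp _; have := rowok j; lra.
    + move=> t tp _; have := rowok k; lra.
  lra.
Qed.

Lemma coord_dec j t : 0 < bp j + bm j -> 0 <= t -> t <= pc j ->
  0 <= bp j - t * ((1 + sig j) / 2) /\ 0 <= bm j - t * ((1 - sig j) / 2).
Proof.
move=> h ht htp; have [pcj [[sj ej]|[sj ej]]] := active j h; rewrite sj;
have := bp0 j; have := bm0 j; move=> *; split; lra.
Qed.

Lemma act_of j k : 0 < `|Th j k| -> 0 < bp j + bm j.
Proof. move=> h; have := rowl1_ge j k; have := rowok j; lra. Qed.

Lemma dec (j k : 'I_p) (jk : j != k) (s : R) : (s = 1 \/ s = -1) -> 0 < s * Th j k ->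
  0 <= (sig j * g j + wb * sig k * g k + (1 + wb) * s / 2 * G j k)
       - (1 + wb) * lam - (1 + wb) * lam / 2.
Proof.
move=> hs hsT.
have hTh : 0 < `|Th j k|.
  rewrite normr_gt0; apply/negP => /eqP h0; rewrite h0 mulr0 in hsT; lra.
have aj := act_of j k hTh.
have pj0 := proj1 (active j aj).
pose t0 := Num.min `|Th j k| (Num.min (pc j) (if b then pc k else 1)).
have := @pair_gen j k jk (- s) (- (wb * s)) (- ((1 + sig j) / 2)) (- ((1 - sig j) / 2))
   (- (wb * (1 + sig k) / 2)) (- (wb * (1 - sig k) / 2)) (-1) (- wb) t0.
rewrite /wb /t0; have [hb|hb] := boolP b.
- have hTk : 0 < `|Th k j| by rewrite (Th_sym k j hb).
  have ak := act_of k j hTk.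
  have pk0 := proj1 (active k ak).
  move=> H.
  have : 0 <= - ((- ((1 + sig j) / 2) - - ((1 - sig j) / 2)) * g j
       + (- (1 * (1 + sig k) / 2) - - (1 * (1 - sig k) / 2)) * g k
       + (- s + - (1 * s)) / 2 * G j k)
     + lam * (- ((1 + sig j) / 2) + - ((1 - sig j) / 2) + - (1 * (1 + sig k) / 2)
              + - (1 * (1 - sig k) / 2))
     + lam / 2 * (-1 + - 1).
    apply: H.
    + by rewrite !lt_min hTh pj0 pk0.
    + by move=> _; rewrite mul1r.
    + move=> t tp; rewrite !le_min => /andP [t1 /andP [t2 t3]].
      by rewrite mulrN1 absdec // ltW.
    + move=> t tp; rewrite !le_min => /andP [t1 /andP [t2 t3]].
      rewrite mul1r mulrN1 (Th_sym k j hb) absdec // ?ltW //.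
    + move=> t tp; rewrite !le_min => /andP [t1 /andP [t2 t3]].
      have [c1 c2] := coord_dec j t aj (ltW tp) t2.
      have [c3 c4] := coord_dec k t ak (ltW tp) t3.
      split; lra.
    + move=> t tp _; have := rowok j; lra.
    + move=> t tp _; have := rowok k; lra.
  lra.
- move=> H.
  have : 0 <= - ((- ((1 + sig j) / 2) - - ((1 - sig j) / 2)) * g j
       + (- (0 * (1 + sig k) / 2) - - (0 * (1 - sig k) / 2)) * g k
       + (- s + - (0 * s)) / 2 * G j k)
     + lam * (- ((1 + sig j) / 2) + - ((1 - sig j) / 2) + - (0 * (1 + sig k) / 2)
              + - (0 * (1 - sig k) / 2))
     + lam / 2 * (-1 + - 0).
    apply: H.
    + by rewrite !lt_min hTh pj0 ltr01.
    + by move=> /negP.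
    + move=> t tp; rewrite !le_min => /andP [t1 /andP [t2 t3]].
      by rewrite mulrN1 absdec // ltW.
    + by move=> t tp _; rewrite !mul0r !oppr0 !mulr0 !addr0.
    + move=> t tp; rewrite !le_min => /andP [t1 /andP [t2 t3]].
      have [c1 c2] := coord_dec j t aj (ltW tp) t2.
      have := bp0 k; have := bm0 k.
      move=> *; split; lra.
    + move=> t tp _; have := rowok j; lra.
    + move=> t tp _; have := rowok k; lra.
  lra.
Qed.

Lemma sgn_ex (x : R) : x != 0 -> exists s : R, (s = 1 \/ s = -1) /\ 0 < s * x.
Proof.
move=> hx; have [h|h] := ltP 0 x; first by exists 1; split; [left | rewrite mul1r].
exists (-1); split; first by right.
by rewrite mulN1r oppr_gt0 lt_neqAle hx h.
Qed.

Lemma sig_bounds j : -1 <= sig j <= 1.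
Proof. by case: (sigE j) => ->; apply/andP; split; lra. Qed.

Lemma pair_sign j k (jk : j != k) (hT : Th j k != 0) (tj : R) :
  -1 <= tj <= 1 -> 0 <= (sig j - tj) * g j.
Proof.
move=> htj; have [s [hs hsT]] := sgn_ex (Th j k) hT.
have h1 := inc j k jk s tj (sig k) hs (ltW hsT) htj (sig_bounds k).
have h2 := dec j k jk s hs hsT.
lra.
Qed.

Lemma exists_nz j : 0 < rowl1 Th j -> exists k, j != k /\ Th j k != 0.
Proof.
move=> h; case: (pickP (fun k => Th j k != 0)) => [k hk|h0].
  exists k; split => //; apply/negP => /eqP ejk; rewrite -ejk diag0 eqxx in hk.
  done.
suff : rowl1 Th j = 0 by lra.
rewrite /rowl1 big1 // => k _; move: (h0 k) => /= /negbFE /eqP ->; exact: normr0.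
Qed.

Lemma sig_abs j : sig j * g j = `|g j|.
Proof.
have [hp|hp] := ltP 0 (bp j).
  have sj : sig j = 1 by rewrite /sig hp.
  have [hm|hm] := ltP 0 (bm j); first by rewrite K3 // mulr0 normr0.
  rewrite sj mul1r ger0_norm //.
  have [hs|ht] := ltP (rowl1 Th j) (bp j + bm j); first by rewrite K2 // ltW.
  have [k [jk hk]] : exists k, j != k /\ Th j k != 0.
    by apply: exists_nz; have := bm0 j; have := bp0 j; lra.
  have h : 0 <= (sig j - -1) * g j.
    by apply: (pair_sign j k jk hk (-1)); apply/andP; split; lra.
  rewrite sj in h; lra.
have [hm|hm] := ltP 0 (bm j).
  have sj : sig j = -1 by rewrite /sig ltNge hp /= hm.
  rewrite sj mulN1r ler0_norm ?opprK //.
  have [hs|ht] := ltP (rowl1 Th j) (bp j + bm j).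
    by rewrite K2' // oppr_le0 ltW.
  have [k [jk hk]] : exists k, j != k /\ Th j k != 0.
    by apply: exists_nz; have := bm0 j; have := bp0 j; lra.
  have h : 0 <= (sig j - 1) * g j.
    by apply: (pair_sign j k jk hk 1); apply/andP; split; lra.
  rewrite sj in h; lra.
rewrite /sig ltNge hp /= ltNge hm /=.
have [hg|hg] := leP 0 (g j); first by rewrite mul1r ger0_norm.
by rewrite mulN1r ltr0_norm.
Qed.

Definition alpha j : R := lam - sig j * g j.

Lemma alpha_ge0 j : 0 <= alpha j.
Proof. by rewrite /alpha sig_abs subr_ge0 K1. Qed.

Lemma rowl1_ge0 j : 0 <= rowl1 Th j.
Proof. by apply: sumr_ge0 => k _; exact: normr_ge0. Qed.

Lemma alpha_slack j : rowl1 Th j < bp j + bm j -> alpha j = 0.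
Proof.
move=> hs; rewrite /alpha sig_abs.
have [hp|hp] := ltP 0 (bp j); first by rewrite K2 // gtr0_norm // subrr.
have [hm|hm] := ltP 0 (bm j); first by rewrite K2' // normrN gtr0_norm // subrr.
have := rowl1_ge0 j; have := bp0 j; have := bm0 j; lra.
Qed.

Lemma beta_soft j : bp j - bm j = soft (g j + (bp j - bm j)) (lam - alpha j).
Proof.
have -> : lam - alpha j = `|g j| by rewrite /alpha sig_abs; ring.
apply: soft_beta.
have hsa := sig_abs j.
have [hp|hp] := ltP 0 (bp j); have [hm|hm] := ltP 0 (bm j).
- by right; right; right; exact: K3.
- have sj : sig j = 1 by rewrite /sig hp.
  rewrite sj mul1r in hsa; have := normr_ge0 (g j); have := bm0 j.
  by move=> *; left; split; lra.
- have sj : sig j = -1 by rewrite /sig ltNge hp /= hm.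
  rewrite sj mulN1r in hsa; have := normr_ge0 (g j); have := bp0 j.
  by move=> *; right; left; split; lra.
- have := bp0 j; have := bm0 j; move=> *; right; right; left; lra.
Qed.

Lemma entry j k (jk : j != k) :
  let L := (1 + wb) * lam + (1 + wb) * lam / 2 - sig j * g j - wb * sig k * g k in
  (0 < Th j k -> (1 + wb) / 2 * G j k = L) /\
  (Th j k < 0 -> (1 + wb) / 2 * G j k = - L) /\
  (Th j k = 0 -> (1 + wb) / 2 * G j k <= L /\ - ((1 + wb) / 2 * G j k) <= L).
Proof.
move=> L; have sb := sig_bounds j; have sk := sig_bounds k.
split; [|split].
- move=> h.
  have h1 := inc j k jk 1 (sig j) (sig k) (or_introl erefl) (_ : 0 <= 1 * Th j k) sb sk.
  have h2 := dec j k jk 1 (or_introl erefl) (_ : 0 < 1 * Th j k).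
  rewrite mul1r in h1 h2; have {h1} := h1 (ltW h); have {h2} := h2 h.
  rewrite /L; lra.
- move=> h.
  have h1 := inc j k jk (-1) (sig j) (sig k) (or_intror erefl) (_ : 0 <= -1 * Th j k) sb sk.
  have h2 := dec j k jk (-1) (or_intror erefl) (_ : 0 < -1 * Th j k).
  rewrite mulN1r oppr_ge0 in h1; rewrite mulN1r oppr_gt0 in h2.
  have {h1} := h1 (ltW h); have {h2} := h2 h.
  rewrite /L; lra.
- move=> h.
  have h1 := inc j k jk 1 (sig j) (sig k) (or_introl erefl) (_ : 0 <= 1 * Th j k) sb sk.
  have h2 := inc j k jk (-1) (sig j) (sig k) (or_intror erefl) (_ : 0 <= -1 * Th j k) sb sk.
  rewrite h in h1 h2.
  have {h1} := h1 ltac:(by rewrite mulr0); have {h2} := h2 ltac:(by rewrite mulr0).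
  rewrite /L; move=> *; split; lra.
Qed.

Lemma fitted_eq i : fitted X b0 bp bm Th i = y i - resid X y b0 bp bm Th i.
Proof.
rewrite /fitted /resid.
have -> : \sum_j \sum_(k | k != j) Th j k * colprod X j k i
        = \sum_j \sum_k X i j * Th j k * X i k.
  apply: eq_bigr => j _; rewrite [RHS](bigD1 j) //= diag0 mulr0 mul0r add0r.
  by apply: eq_bigr => k _; rewrite /colprod; ring.
ring.
Qed.

Lemma dotv_j (Hx : forall j : 'I_p, \sum_i X i j ^+ 2 = 1) j :
  dotv (fun i => X i j) (resid_j X y b0 bp bm Th j) = g j + (bp j - bm j).
Proof.
rewrite /dotv /resid_j.
transitivity (\sum_i X i j * resid X y b0 bp bm Th i + (bp j - bm j) * \sum_i X i j ^+ 2).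
  rewrite mulr_sumr -big_split /=; apply: eq_bigr => i _; rewrite fitted_eq; ring.
by rewrite Hx mulr1.
Qed.

Lemma dotv_jk j k :
  dotv (colprod X j k) (resid_jk X y b0 bp bm Th j k)
  = G j k + dotv (colprod X j k) (colprod X j k) * ((Th j k + Th k j) / 2).
Proof.
rewrite /dotv /resid_jk.
rewrite mulr_suml -big_split /=; apply: eq_bigr => i _; rewrite fitted_eq /colprod; ring.
Qed.

Lemma d_ge0 j k : 0 <= dotv (colprod X j k) (colprod X j k).
Proof. by apply: sumr_ge0 => i _; rewrite -expr2 sqr_ge0. Qed.

Lemma d0G j k : dotv (colprod X j k) (colprod X j k) = 0 -> G j k = 0.
Proof.
move=> /psumr_eq0P h.
have nn : forall i, true -> 0 <= colprod X j k i * colprod X j k i.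
  by move=> i _; rewrite -expr2 sqr_ge0.
have h' : forall i, X i j * X i k = 0.
  move=> i; have /eqP := h nn i isT; rewrite mulf_eq0 orbb => /eqP.
  by rewrite /colprod.
by rewrite /Gjk big1 // => i _; rewrite h' mul0r.
Qed.

Lemma final_strong (hb : b) j k : k != j ->
  Th j k = soft (dotv (colprod X j k) (resid_jk X y b0 bp bm Th j k))
                (lam + alpha j + alpha k)
           / dotv (colprod X j k) (colprod X j k).
Proof.
move=> kj; have jk : j != k by rewrite eq_sym.
rewrite dotv_jk (Th_sym k j hb).
have -> : (Th j k + Th j k) / 2 = Th j k by field.
have aj := alpha_ge0 j; have ak := alpha_ge0 k.
apply: soft_pair; [have := Hlam; lra | exact: d_ge0 | exact: d0G |].
have [e1 [e2 e3]] := entry j k jk.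
rewrite /wb hb in e1 e2 e3.
move: aj ak; rewrite /alpha => aj ak.
have [h|h|h] := ltgtP (Th j k) 0.
- by right; right; split => //; have := e2 h; lra.
- by right; left; split => //; have := e1 h; lra.
- left; split => //; have [h1 h2] := e3 h.
  by case: (normE R (G j k)) => -[_ ->]; lra.
Qed.

Lemma final_weak (hb : ~~ b) j k : k != j ->
  (Th j k + Th k j) / 2 =
    soft (dotv (colprod X j k) (resid_jk X y b0 bp bm Th j k))
         (lam + 2 * Num.min (alpha j) (alpha k))
    / dotv (colprod X j k) (colprod X j k).
Proof.
move=> kj; have jk : j != k by rewrite eq_sym.
rewrite dotv_jk.
have aj := alpha_ge0 j; have ak := alpha_ge0 k.
have hL : 0 < lam + 2 * Num.min (alpha j) (alpha k).
  have := Hlam; have [m|m] := leP (alpha j) (alpha k); lra.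
apply: soft_pair; [exact: hL | exact: d_ge0 | exact: d0G |].
have [e1 [e2 e3]] := entry j k jk.
have [f1 [f2 f3]] := entry k j kj.
rewrite /wb (negbTE hb) in e1 e2 e3 f1 f2 f3.
rewrite (Gsym j k) in f1 f2 f3.
have Hl0 := Hlam.
move: aj ak hL; rewrite /alpha => aj ak hL.
have -> : lam + 2 * Num.min (lam - sig j * g j) (lam - sig k * g k)
  = Num.min (lam + 2 * (lam - sig j * g j)) (lam + 2 * (lam - sig k * g k)).
  have [m|m] := leP (lam - sig j * g j) (lam - sig k * g k);
  have [m'|m'] := leP (lam + 2 * (lam - sig j * g j)) (lam + 2 * (lam - sig k * g k)); lra.
apply: weak_comb.
- lra.
- lra.
- by move=> h; have := e1 h; lra.
- by move=> h; have := e2 h; lra.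
- by move=> h; have [] := e3 h; lra.
- by move=> h; have := f1 h; lra.
- by move=> h; have := f2 h; lra.
- by move=> h; have [] := f3 h; lra.
Qed.

End Main.

Arguments alpha_ge0 {R n p X y lam b0 bp bm Th b}.
Arguments alpha_slack {R n p X y lam b0 bp bm Th b}.
Arguments beta_soft {R n p X y lam b0 bp bm Th b}.
Arguments final_strong {R n p X y lam b0 bp bm Th b}.
Arguments final_weak {R n p X y lam b0 bp bm Th b}.
Arguments dotv_j {R n p X y lam b0 bp bm Th b}.

Theorem mainTheorem1 (R : realType) (n p : nat) (X : 'M[R]_(n, p))
    (y : 'I_n -> R) (lam : R) :
  (forall j : 'I_p, \sum_i X i j ^+ 2 = 1) ->
  0 < lam ->
  (forall (b0 : R) (bp bm : 'I_p -> R) (Th : 'M[R]_p),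
     strong_hl_solution X y lam b0 bp bm Th ->
     exists alpha : 'I_p -> R,
       (forall j, 0 <= alpha j) /\
       (forall j, rowl1 Th j < bp j + bm j -> alpha j = 0) /\
       (forall j, bp j - bm j =
          soft (dotv (fun i => X i j) (resid_j X y b0 bp bm Th j)) (lam - alpha j)) /\
       (forall j k, k != j ->
          Th j k = soft (dotv (colprod X j k) (resid_jk X y b0 bp bm Th j k))
                        (lam + alpha j + alpha k)
                   / dotv (colprod X j k) (colprod X j k))) /\
  (forall (b0 : R) (bp bm : 'I_p -> R) (Th : 'M[R]_p),
     weak_hl_solution X y lam b0 bp bm Th ->
     exists alpha : 'I_p -> R,
       (forall j, 0 <= alpha j) /\
       (forall j, rowl1 Th j < bp j + bm j -> alpha j = 0) /\
       (forall j, bp j - bm j =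
          soft (dotv (fun i => X i j) (resid_j X y b0 bp bm Th j)) (lam - alpha j)) /\
       (forall j k, k != j ->
          (Th j k + Th k j) / 2 =
            soft (dotv (colprod X j k) (resid_jk X y b0 bp bm Th j k))
                 (lam + 2 * Num.min (alpha j) (alpha k))
            / dotv (colprod X j k) (colprod X j k))).
Proof.
move=> Hx Hlam; split.
- move=> b0 bp bm Th sol.
  have sol' : is_solution (feasb R p true) X y lam b0 bp bm Th := sol.
  exists (alpha R n p X y lam b0 bp bm Th); split; [|split; [|split]].
  + exact: (alpha_ge0 Hlam sol').
  + exact: (alpha_slack Hlam sol').
  + by move=> j; rewrite (dotv_j sol' Hx); exact: (beta_soft Hlam sol').
  + by move=> j k kj; exact: (final_strong Hlam sol' isT j k kj).
- move=> b0 bp bm Th sol.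
  have sol' : is_solution (feasb R p false) X y lam b0 bp bm Th := sol.
  exists (alpha R n p X y lam b0 bp bm Th); split; [|split; [|split]].
  + exact: (alpha_ge0 Hlam sol').
  + exact: (alpha_slack Hlam sol').
  + by move=> j; rewrite (dotv_j sol' Hx); exact: (beta_soft Hlam sol').
  + by move=> j k kj; exact: (final_weak Hlam sol' isT j k kj).
Qed.
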